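(* Let $L\subseteq\Sigma^*$ be a regular closed language with $\kappa(L)=n$ and $L\notin\{\emptyset,\Sigma^*\}$, such that the eight languages $L$, $L^-$, $L^{-*}=L^-\cup\{\epsilon\}$, $L^{-*-}=L\setminus\{\epsilon\}$, $L^*$, $L^{*-}$, $L^{*-*}=L^{*-}\cup\{\epsilon\}$, $L^{*-*-}=L^*\setminus\{\epsilon\}$ are pairwise distinct (in particular $L\ne L^*$). Then: - $\kappa(L)=\kappa(L^-)=n$; - $\kappa(L^* )=\kappa(L^{*-})\le f(n)$; - $\kappa(L^{*-*})=\kappa(L^{*-*-})\le f(n)+1$; - $\kappa(L^{-*})=\kappa(L^{-*-})\le n+1$. Here $f(n)=2^{n-2}+1$ if $L$ is prefix-closed, $f(n)=n-1$ if $L$ is suffix-closed, and $f(n)=2$ if $L$ is factor-closed or subword-closed. Moreover, for each of the classes prefix-closed, suffix-closed and subword-closed (hence also factor-closed), and every sufficiently large $n$ (e.g. $n\ge 4$), there exists a language $L$ of that class with $\kappa(L)=n$ attaining all these bounds simultaneously.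
   Context: $\Sigma$ is a finite non-empty alphabet. $\kappa(L)$ is the number of distinct left quotients $L_w=\{x\mid wx\in L\}$ of $L$ (its state complexity). $L^-=\Sigma^*\setminus L$ is complement and $L^*$ is Kleene star; superscript strings such as $L^{*-*}$ denote successive application of the operations from left to right. A language is prefix-closed (suffix-, factor-, subword-closed) if it contains every prefix (suffix, factor, subword) of each of its words, where subword means scattered subsequence. ''Closed'' means any of these four. *)

(* Defs.v *)
From mathcomp Require Import all_boot.
Set Implicit Arguments. Unset Strict Implicit. Unset Printing Implicit Defensive.

Definition lang (Sigma : Type) := seq Sigma -> Prop.

Definition lang_eq (Sigma : Type) (L1 L2 : lang Sigma) : Prop :=
  forall w, L1 w <-> L2 w.

Definition quot (Sigma : Type) (L : lang Sigma) (w : seq Sigma) : lang Sigma :=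
  fun x => L (w ++ x).

(* kappa L = n : L has exactly n distinct left quotients *)
Definition has_kappa (Sigma : Type) (L : lang Sigma) (n : nat) : Prop :=
  exists ws : seq (seq Sigma),
    size ws = n /\
    (forall i j, i < n -> j < n -> i <> j ->
       ~ lang_eq (quot L (nth [::] ws i)) (quot L (nth [::] ws j))) /\
    (forall w, exists2 i, i < n & lang_eq (quot L w) (quot L (nth [::] ws i))).

Definition regular (Sigma : finType) (L : lang Sigma) : Prop :=
  exists (Q : finType) (q0 : Q) (delta : Q -> Sigma -> Q) (F : pred Q),
    forall w, L w <-> F (foldl delta q0 w).

Definition empty_lang (Sigma : Type) : lang Sigma := fun _ => False.
Definition full_lang (Sigma : Type) : lang Sigma := fun _ => True.

Definition compl (Sigma : Type) (L : lang Sigma) : lang Sigma := fun w => ~ L w.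

Definition star (Sigma : Type) (L : lang Sigma) : lang Sigma :=
  fun w => exists ws : seq (seq Sigma), (forall i, i < size ws -> L (nth [::] ws i)) /\ w = flatten ws.

Definition prefix_closed (Sigma : Type) (L : lang Sigma) : Prop :=
  forall u v, L (u ++ v) -> L u.
Definition suffix_closed (Sigma : Type) (L : lang Sigma) : Prop :=
  forall u v, L (u ++ v) -> L v.
Definition factor_closed (Sigma : Type) (L : lang Sigma) : Prop :=
  forall u v x, L (u ++ v ++ x) -> L v.
Definition subword_closed (Sigma : eqType) (L : lang Sigma) : Prop :=
  forall u w, subseq u w -> L w -> L u.

Inductive closure_class := Prefix | Suffix | Factor | Subword.

Definition closed_in (c : closure_class) (Sigma : finType) (L : lang Sigma) : Prop :=
  match c with
  | Prefix => prefix_closed L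
  | Suffix => suffix_closed L
  | Factor => factor_closed L
  | Subword => subword_closed L
  end.

Definition fbound (c : closure_class) (n : nat) : nat :=
  match c with
  | Prefix => 2 ^ (n - 2) + 1
  | Suffix => n - 1
  | Factor | Subword => 2
  end.

Definition eight (Sigma : Type) (L : lang Sigma) : seq (lang Sigma) :=
  [:: L; compl L; star (compl L); compl (star (compl L));
      star L; compl (star L); star (compl (star L));
      compl (star (compl (star L)))].

Definition eight_distinct (Sigma : Type) (L : lang Sigma) : Prop :=
  forall i j, i < 8 -> j < 8 -> i <> j ->
    ~ lang_eq (nth L (eight L) i) (nth L (eight L) j).

Definition hyps (c : closure_class) (Sigma : finType) (L : lang Sigma) (n : nat) : Prop :=
  [/\ regular L, closed_in c L, has_kappa L n,
      ~ lang_eq L (@empty_lang Sigma) /\ ~ lang_eq L (@full_lang Sigma)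
    & eight_distinct L].

(* Main.v *)
Require Import Defs.
From mathcomp Require Import all_boot.
From Stdlib Require Import Classical ClassicalEpsilon.
Set Implicit Arguments. Unset Strict Implicit. Unset Printing Implicit Defensive.

Definition pb (P : Prop) : bool := if excluded_middle_informative P then true else false.
Lemma pbP (P : Prop) : reflect P (pb P).
Proof. rewrite /pb; case: excluded_middle_informative => h; [exact: ReflectT|exact: ReflectF]. Qed.

Lemma leq_refl' {S} (L : lang S) : lang_eq L L. Proof. by []. Qed.
Lemma leq_sym {S} (L M : lang S) : lang_eq L M -> lang_eq M L.
Proof. by move=> h w; split=> /h. Qed.
Lemma leq_trans' {S} (L M N : lang S) : lang_eq L M -> lang_eq M N -> lang_eq L N.
Proof. by move=> h1 h2 w; split=> [/h1/h2|/h2/h1]. Qed.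

Lemma quot_congr {S} (L : lang S) u v a :
  lang_eq (quot L u) (quot L v) -> lang_eq (quot L (u ++ a)) (quot L (v ++ a)).
Proof. by move=> h x; rewrite /quot -!catA; apply: h. Qed.

Lemma quot_nil {S} (L : lang S) w : quot L w [::] <-> L w.
Proof. by rewrite /quot cats0. Qed.

Lemma cover_dedup {S} (L : lang S) (ws : seq (seq S)) :
  exists ws0 : seq (seq S), [/\ size ws0 <= size ws,
    (forall i j, i < size ws0 -> j < size ws0 -> i <> j ->
       ~ lang_eq (quot L (nth [::] ws0 i)) (quot L (nth [::] ws0 j)))
  & (forall i, i < size ws -> exists2 j, j < size ws0 &
       lang_eq (quot L (nth [::] ws i)) (quot L (nth [::] ws0 j)))].
Proof.
elim: ws => [|w ws [ws0 [hs hd hc]]].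
  by exists [::]; split.
case: (classic (exists j, j < size ws0 /\ lang_eq (quot L w) (quot L (nth [::] ws0 j)))).
  move=> [j [hj hq]]; exists ws0; split => //; first by apply: leqW.
  by case=> [|i] /= hi; [exists j | apply: hc].
move=> hn; exists (w :: ws0); split => //=.
- case=> [|i] [|j] //= hi hj hij.
  + by move=> h; apply: hn; exists j; split.
  + by move=> h; apply: hn; exists i; split => //; apply: leq_sym.
  + by apply: hd => // e; apply: hij; rewrite e.
- case=> [|i] /= hi; first by exists 0.
  by have [j hj hq] := hc i hi; exists j.+1.
Qed.

Lemma kappa_cover {S} (L : lang S) (ws : seq (seq S)) :
  (forall w, exists2 i, i < size ws & lang_eq (quot L w) (quot L (nth [::] ws i))) ->
  exists m, m <= size ws /\ has_kappa L m.
Proof.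
move=> hcov; have [ws0 [hs hd hc]] := cover_dedup L ws.
exists (size ws0); split => //; exists ws0; split => //; split => // w.
have [i hi hq] := hcov w; have [j hj hq'] := hc i hi.
by exists j => //; apply: leq_trans' hq hq'.
Qed.

Lemma kappa_key {S} (L : lang S) (key : seq S -> nat) b :
  (forall w, key w < b) -> (forall w w', key w = key w' -> lang_eq (quot L w) (quot L w')) ->
  exists m, m <= b /\ has_kappa L m.
Proof.
move=> hb hk.
pose pick i := epsilon (inhabits [::]) (fun w => key w = i).
have hc : forall w, exists2 i, i < size (map pick (iota 0 b)) &
    lang_eq (quot L w) (quot L (nth [::] (map pick (iota 0 b)) i)).
  move=> w; exists (key w); first by rewrite size_map size_iota.
  rewrite (nth_map 0) ?size_iota // nth_iota // add0n.
  apply: hk; symmetry; apply: (epsilon_spec (inhabits [::]) (fun w' => key w' = key w)).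
  by exists w.
have [m [hm hK]] := kappa_cover hc.
by exists m; split => //; rewrite size_map size_iota in hm.
Qed.

Lemma kappa_keyF {S} {K : finType} (L : lang S) (key : seq S -> K) (A : {set K}) :
  (forall w, key w \in A) -> (forall w w', key w = key w' -> lang_eq (quot L w) (quot L w')) ->
  exists m, m <= #|A| /\ has_kappa L m.
Proof.
move=> hA hk; apply: (kappa_key (key := fun w => index (key w) (enum A))).
  by move=> w; rewrite cardE index_mem mem_enum.
move=> w w' e; apply: hk.
have h1 : key w \in enum A by rewrite mem_enum.
have h2 : key w' \in enum A by rewrite mem_enum.
by rewrite -(nth_index (key w) h1) -(nth_index (key w) h2) e.
Qed.

Lemma kappa_idx {S} (L : lang S) n : has_kappa L n ->
  exists (ws : seq (seq S)) (idx : seq S -> 'I_n), [/\ size ws = n,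
    (forall i j, i < n -> j < n -> i <> j ->
       ~ lang_eq (quot L (nth [::] ws i)) (quot L (nth [::] ws j)))
  & (forall w, lang_eq (quot L w) (quot L (nth [::] ws (idx w))))].
Proof.
move=> [ws [hs [hd hc]]].
have hc' : forall w, exists j : 'I_n, lang_eq (quot L w) (quot L (nth [::] ws j)).
  by move=> w; have [i hi hq] := hc w; exists (Ordinal hi).
exists ws, (fun w => proj1_sig (constructive_indefinite_description _ (hc' w))).
split => // w; exact: (proj2_sig (constructive_indefinite_description _ (hc' w))).
Qed.

Lemma kappa_lower {S} {I : finType} (L : lang S) m (g : I -> seq S) :
  has_kappa L m -> (forall i j, i != j -> ~ lang_eq (quot L (g i)) (quot L (g j))) ->
  #|I| <= m.
Proof.
move=> /kappa_idx [ws [idx [hs hd hc]]] hg.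
rewrite -(card_ord m); apply: (@leq_card _ _ (fun i => idx (g i))).
move=> i j e; apply/eqP; apply/negP => /negP hij; apply: (hg i j hij).
apply: leq_trans' (hc (g i)) _; rewrite e; apply: leq_sym; exact: hc.
Qed.

Lemma kappa_exact {S} {I : finType} (M : lang S) m (g : I -> seq S) :
  has_kappa M m -> m <= #|I| ->
  (forall i j, i != j -> ~ lang_eq (quot M (g i)) (quot M (g j))) -> has_kappa M #|I|.
Proof.
move=> hk hm hd; have := kappa_lower hk hd => h.
by have -> : #|I| = m by apply/eqP; rewrite eqn_leq h hm.
Qed.

Lemma kappa_compl {S} (L : lang S) n : has_kappa L n -> has_kappa (compl L) n.
Proof.
move=> [ws [hs [hd hc]]]; exists ws; split => //; split.
  move=> i j hi hj hij heq; apply: (hd i j hi hj hij) => x; split => h;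
  apply: NNPP => hn; by move: (heq x); rewrite /quot /compl; tauto.
move=> w; have [i hi hq] := hc w; exists i => // x.
rewrite /quot /compl; have := hq x; rewrite /quot; tauto.
Qed.

Lemma star_nil {S} (L : lang S) : star L [::].
Proof. by exists [::]. Qed.

Lemma star_one {S} (L : lang S) w : L w -> star L w.
Proof. by move=> h; exists [:: w]; split => [[|i]|] //=; rewrite cats0. Qed.

Lemma star_cons {S} (L : lang S) u v : L u -> star L v -> star L (u ++ v).
Proof.
move=> hu [ws [hws ->]]; exists (u :: ws); split => // [[|i]] //= hi.
exact: hws.
Qed.

Lemma star_ind_gen {S} (L : lang S) (P : seq S -> Prop) :
  P [::] -> (forall u v, L u -> P v -> P (u ++ v)) -> forall w, star L w -> P w.
Proof.
move=> h0 hs w [ws [hws ->]]; elim: ws hws => [|a ws IH] hws //=.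
apply: hs; first exact: (hws 0).
by apply: IH => i hi; apply: (hws i.+1).
Qed.

Lemma star_cat {S} (L : lang S) u v : star L u -> star L v -> star L (u ++ v).
Proof.
move=> hu hv; move: u hu; apply: star_ind_gen => // u w hu hw.
by rewrite -catA; apply: star_cons.
Qed.

Lemma cat_split {T} (a b c d : seq T) : a ++ b = c ++ d ->
  (exists e, c = a ++ e /\ b = e ++ d) \/ (exists e, a = c ++ e /\ d = e ++ b).
Proof.
elim: a c => [|x a IH] [|y c] /=.
- by move=> ->; left; exists [::].
- by move=> ->; left; exists (y :: c).
- by move=> <-; right; exists (x :: a).
- move=> e; injection e as -> e'.
  by case: (IH _ e') => [[f [-> ->]]|[f [-> ->]]]; [left|right]; exists f.
Qed.

Lemma star_dec {S} (L : lang S) w x : L [::] -> star L (w ++ x) ->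
  exists u v y z, [/\ w = u ++ v, star L u, x = y ++ z, L (v ++ y) & star L z].
Proof.
move=> h0 hs.
have key : forall t, star L t -> star L t /\ forall w x, t = w ++ x -> exists u v y z,
  [/\ w = u ++ v, star L u, x = y ++ z, L (v ++ y) & star L z].
  apply: star_ind_gen.
    split; first exact: star_nil.
    case=> [|//] [|//] _; exists [::], [::], [::], [::]; split => //; exact: star_nil.
  move=> u v hu [hv IH]; split; first exact: star_cons.
  move=> w' x' /cat_split [[e [-> ev]]|[e [eu ->]]].
    have [u' [v' [y [z [-> hu' -> hy hz]]]]] := IH e x' ev.
    exists (u ++ u'), v', y, z; split => //; first by rewrite catA.
    exact: star_cons.
  exists [::], w', e, v; split => //; [exact: star_nil | by rewrite -eu].
by have [_ /(_ w x erefl)] := key _ hs.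
Qed.

Lemma star_last {S} (L : lang S) w : star L w -> w <> [::] ->
  exists u v, [/\ w = u ++ v, star L u, L v & v <> [::]].
Proof.
move: w; apply: (star_ind_gen (P := fun w => w <> [::] -> exists u v, [/\ w = u ++ v, star L u, L v & v <> [::]])) => //.
move=> u v hu IH ne.
case: v IH ne => [|a v] IH ne.
  exists [::], u; rewrite cats0 in ne *; split => //; exact: star_nil.
have [u' [v' [e hu' hv' ne']]] := IH (fun h => ltac:(discriminate h)).
by exists (u ++ u'), v'; split => //; [rewrite e catA | apply: star_cons].
Qed.

Lemma pc_nil {S} (L : lang S) w : prefix_closed L -> L w -> L [::].
Proof. by move=> h hw; apply: (h [::] w). Qed.
Lemma sc_nil {S} (L : lang S) w : suffix_closed L -> L w -> L [::].
Proof. by move=> h hw; apply: (h w [::]); rewrite cats0. Qed.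

Lemma pc_star {S} (L : lang S) : prefix_closed L -> L [::] -> prefix_closed (star L).
Proof.
move=> hp h0 u v /(star_dec h0) [u' [v' [y [z [-> hu' _ hy _]]]]].
exact: (star_cat hu' (star_one (hp _ _ hy))).
Qed.
Lemma sc_star {S} (L : lang S) : suffix_closed L -> L [::] -> suffix_closed (star L).
Proof.
move=> hs h0 u v /(star_dec h0) [u' [v' [y [z [_ _ -> hy hz]]]]].
exact: (star_cons (hs _ _ hy) hz).
Qed.

Definition osc {S} (L : lang S) := prefix_closed L \/ suffix_closed L.

Lemma osc_star {S} (L : lang S) : osc L -> L [::] -> osc (star L).
Proof. by move=> [h|h] h0; [left; apply: pc_star|right; apply: sc_star]. Qed.

Lemma star_sub {S} (L : lang S) w : L w -> star L w.
Proof. exact: star_one. Qed.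

Lemma star_compl_eq {S} (M : lang S) : M [::] -> osc M ->
  forall w, star (compl M) w <-> (w = [::] \/ ~ M w).
Proof.
move=> h0 hc w; split.
- move: w; apply: star_ind_gen; first by left.
  move=> u v hu [->|hv]; first by rewrite cats0; right.
  right; case: hc => [hp|hs] hm; [apply: hu; exact: hp hm | apply: hv; exact: hs hm].
- by case=> [->|h]; [exact: star_nil|exact: star_one].
Qed.

Lemma scq {S} (M : lang S) w x : M [::] -> osc M -> w <> [::] ->
  (star (compl M) (w ++ x) <-> ~ M (w ++ x)).
Proof.
move=> h0 hc ne; rewrite (star_compl_eq h0 hc); split; last by right.
by case=> // e; case: w ne e.
Qed.

Lemma star_compl_kappa {S} (M : lang S) k : M [::] -> osc M -> has_kappa M k ->
  exists m, m <= k.+1 /\ has_kappa (star (compl M)) m.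
Proof.
move=> h0 hc /kappa_idx [ws [idx [hs hd hi]]].
apply: (kappa_key (key := fun w => if w is [::] then 0 else (idx w).+1)).
  by case=> [|a w] //; rewrite ltnS.
case=> [|a w] [|b w'] //= [e] x.
rewrite /quot !scq //.
have h1 := hi (a :: w) x; have h2 := hi (b :: w') x.
rewrite /quot e in h1 h2; tauto.
Qed.

Lemma star_compl_lower {S} {I : finType} (M : lang S) (g : I -> seq S) :
  M [::] -> osc M -> (forall i, g i <> [::]) ->
  (forall i j, i != j -> ~ lang_eq (quot M (g i)) (quot M (g j))) ->
  (forall i, M (g i) \/ exists x, x <> [::] /\ ((M x /\ ~ M (g i ++ x)) \/ (~ M x /\ M (g i ++ x)))) ->
  forall i j : option I, i != j ->
    ~ lang_eq (quot (star (compl M)) (oapp g [::] i)) (quot (star (compl M)) (oapp g [::] j)).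
Proof.
move=> h0 hc hne hd hsep.
have side : forall i, ~ lang_eq (quot (star (compl M)) [::]) (quot (star (compl M)) (g i)).
  move=> i heq; case: (hsep i) => [hm|[x [nx hx]]].
    have := heq [::]; rewrite /quot /= scq //; rewrite cats0.
    have := star_nil (compl M); tauto.
  have := heq x; rewrite /quot /= scq // (star_compl_eq h0 hc); tauto.
case=> [i|] [j|] hij heq //.
- apply: (hd i j hij) => x; have := heq x; rewrite /quot !scq //; try exact: hne.
  split => h; apply: NNPP; tauto.
- by apply: (side i); apply: leq_sym.
- exact: (side j).
Qed.

Lemma eight_ok {S} (L : lang S) x0 y0 : L [::] -> osc L -> x0 <> [::] -> L x0 ->
  star L y0 -> ~ L y0 -> eight_distinct L.
Proof.
move=> h0 hc nx hx hy ny.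
have hc' := osc_star hc h0; have s0 : star L [::] := star_nil L.
have sx : star L x0 := star_one hx.
have ny0 : y0 <> [::] by move=> e; apply: ny; rewrite e.
have c1 := star_compl_eq h0 hc; have c2 := star_compl_eq s0 hc'.
have v1 : star (compl L) [::] by apply/c1; left.
have v2 : ~ star (compl L) x0 by move/c1; case.
have v3 : star (compl L) y0 by apply/c1; right.
have w1 : star (compl (star L)) [::] by apply/c2; left.
have w2 : ~ star (compl (star L)) x0 by move/c2; case.
have w3 : ~ star (compl (star L)) y0 by move/c2; case.
clear c1 c2.
move=> i j hi hj hij heq.
have h1 := heq [::]; have h2 := heq x0; have h3 := heq y0; clear heq.
move: hi hj hij h1 h2 h3.
case: i => [|[|[|[|[|[|[|[|i]]]]]]]]; case: j => [|[|[|[|[|[|[|[|j]]]]]]]] => // _ _ _; rewrite /eight /=.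
all: rewrite /compl in v1 v2 v3 w1 w2 w3 *; tauto.
Qed.

Lemma kappa_regular {Sigma : finType} (L : lang Sigma) n : has_kappa L n -> regular L.
Proof.
move=> /kappa_idx [ws [idx [hs hd hc]]].
pose d := fun (q : 'I_n) (a : Sigma) => idx (nth [::] ws q ++ [:: a]).
exists ('I_n : finType), (idx [::]), d, (fun q : 'I_n => pb (L (nth [::] ws q))).
have inv : forall w, lang_eq (quot L w) (quot L (nth [::] ws (foldl d (idx [::]) w))).
  elim/last_ind => [|w a IH]; first exact: hc.
  rewrite -cats1 foldl_cat /=.
  exact: (leq_trans' (quot_congr [:: a] IH) (hc _)).
move=> w; have := inv w [::]; rewrite !quot_nil => h.
by split => [/h/pbP|/pbP/h].
Qed.

Lemma card_pair_compl {n} (a b : 'I_n) : a != b -> #|~: [set a; b]| = n - 2 /\ 2 <= n.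
Proof.
move=> ab; have := cardsC [set a; b]; rewrite cards2 ab card_ord => e.
set c := #|~: _| in e *; split; [by rewrite -e addKn | by rewrite -e leq_addr].
Qed.

Lemma star_bound_prefix {S} (L : lang S) n : prefix_closed L -> L [::] -> (exists z, ~ L z) ->
  has_kappa L n -> exists m, m <= 2 ^ (n - 2) + 1 /\ has_kappa (star L) m.
Proof.
move=> hp h0 [z nz] /kappa_idx [ws [idx [hs hd hc]]].
pose i0 := idx [::]; pose s0 := idx z.
have hq : forall v y, L (v ++ y) <-> L (nth [::] ws (idx v) ++ y) by move=> v y; exact: hc.
have ne : i0 != s0.
  apply/eqP => e; apply: nz; have := hq z [::]; have := hq [::] [::].
  rewrite /i0 /s0 in e; rewrite e !cats0 /=; tauto.
pose T w := [set i : 'I_n | pb (exists u v, [/\ w = u ++ v, star L u, idx v = i & L v])].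
pose B := [set X : {set 'I_n} | (i0 \in X) && (s0 \notin X)].
pose A : {set {set 'I_n}} := (set0 : {set 'I_n}) |: B.
have one : forall w w' x, T w = T w' -> star L (w ++ x) -> star L (w' ++ x).
  move=> w w' x e /(@star_dec _ L w x h0) [u [v [y [z' [ew hu ex hvy hz]]]]].
  have : idx v \in T w'.
    rewrite -e /T inE; apply/pbP; exists u, v; split; [exact: ew|exact: hu|by []|exact: (hp _ _ hvy)].
  rewrite /T inE => /pbP [u' [v' [ew' hu' ei _]]].
  have hv'y : L (v' ++ y) by apply: (hq v' y).2; rewrite ei; exact: (hq v y).1 hvy.
  by rewrite ew' ex -catA; apply: star_cat hu' _; rewrite catA; apply: star_cons.
have [m [hm hk]] : exists m, m <= #|A| /\ has_kappa (star L) m.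
  apply: (kappa_keyF (key := T)).
  - move=> w; rewrite /A; case: (T w =P set0) => [->|/eqP ne0]; first exact: setU11.
    apply: setU1r; rewrite inE; apply/andP; split.
      have [i] := set0Pn _ ne0; rewrite inE => /pbP [u [v [ew hu _ hv]]].
      rewrite inE; apply/pbP; exists w, [::]; split => //; first by rewrite cats0.
      by rewrite ew; apply: star_cat hu (star_one hv).
    apply/negP; rewrite inE => /pbP [u [v [_ _ ev hv]]].
    by apply: nz; apply/quot_nil; apply/(hc z); rewrite -/s0 -ev; apply/(hc v); apply/quot_nil.
  - by move=> w w' e x; split; apply: one.
exists m; split => //; apply: (leq_trans hm).
  rewrite cardsU1 addnC; apply: leq_add; last exact: leq_b1.
  have ->: #|B| = #|[set X :\ i0 | X in B]|.
    rewrite card_in_imset // => X Y; rewrite !inE => /andP [hX _] /andP [hY _] e.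
    by rewrite -(setD1K hX) -(setD1K hY) e.
  suff : #|[set X :\ i0 | X in B]| <= #|powerset (~: [set i0; s0])|.
    by rewrite card_powerset; have [-> _] := card_pair_compl ne.
  apply: subset_leq_card; apply/subsetP => Y /imsetP [X]; rewrite inE => /andP [_ hs0] ->.
  rewrite powersetE; apply/subsetP => x; rewrite in_setD1 in_setC in_set2 => /andP [xi xX].
  rewrite (negbTE xi) /=; apply/eqP => exs; by rewrite -exs xX in hs0.
Qed.

Lemma kmax_ex {S} (L : lang S) (w : seq S) :
  exists k, [/\ k <= size w, star L (take k w) &
    forall j, j <= size w -> star L (take j w) -> j <= k].
Proof.
have exP : exists i, (i <= size w) && pb (star L (take i w)).
  by exists 0; rewrite leq0n /=; apply/pbP; rewrite take0; exact: star_nil.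
have ubP : forall i, (i <= size w) && pb (star L (take i w)) -> i <= size w.
  by move=> i /andP [].
case: (ex_maxnP exP ubP) => k /andP [hk /pbP hs] hmax.
exists k; split => // j hj hsj; apply: hmax; rewrite hj; exact/pbP.
Qed.

Lemma arith_nb n b : 2 <= n -> b <= n - 2 -> 1 + b <= n - 1.
Proof. by case: n => [|[|n]] // _; rewrite !subSS !subn0 add1n ltnS. Qed.

Lemma star_bound_suffix {S} (L : lang S) n : suffix_closed L -> L [::] ->
  ~ lang_eq L (star L) -> has_kappa L n -> exists m, m <= n - 1 /\ has_kappa (star L) m.
Proof.
move=> hsc h0 hne /kappa_idx [ws [idx [hs hd hc]]].
have hq : forall v y, L (v ++ y) <-> L (nth [::] ws (idx v) ++ y) by move=> v y; exact: hc.
pose km w := proj1_sig (constructive_indefinite_description _ (kmax_ex L w)).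
have kmP : forall w, [/\ km w <= size w, star L (take (km w) w) &
    forall j, j <= size w -> star L (take j w) -> j <= km w].
  by move=> w; exact: (proj2_sig (constructive_indefinite_description _ (kmax_ex L w))).
pose vs w := drop (km w) w.
have qchar : forall w x, star L (w ++ x) <-> exists y z, [/\ x = y ++ z, L (vs w ++ y) & star L z].
  move=> w x; have [hk hst hmax] := kmP w; split.
    move=> /(@star_dec _ L w x h0) [u [v [y [z [ew hu ex hvy hz]]]]].
    exists y, z; split => //.
    have hsu : size u <= km w.
      apply: hmax; first by rewrite ew size_cat leq_addr.
      by rewrite ew take_size_cat.
    have : drop (km w - size u) v = vs w.
      have ev : v = drop (size u) w by rewrite ew drop_size_cat.
      by rewrite /vs ev drop_drop subnK.
    move=> <-; apply: (hsc (take (km w - size u) v)); rewrite catA cat_take_drop //.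
  move=> [y [z [-> hy hz]]].
  rewrite -{1}(cat_take_drop (km w) w) -catA; apply: star_cat hst _.
  by rewrite catA; apply: star_cons.
have [v1 [hv1 nv1]] : exists v, L v /\ ~ lang_eq (quot L v) (quot L [::]).
  apply: NNPP => hN; apply: hne => w; split; first exact: star_one.
  move: w; apply: star_ind_gen => // u v hu hv.
  have : lang_eq (quot L u) (quot L [::]).
    by apply: NNPP => hn; apply: hN; exists u.
  by move/(_ v) => /= h; apply/h.
pose i0 := idx [::]; pose j := idx v1.
have ij : i0 != j.
  apply/eqP => e; apply: nv1 => x; have := hq v1 x; have := hq [::] x.
  rewrite /quot /= /i0 /j in e *; rewrite e; tauto.
pose B := [set i : 'I_n | ~~ pb (L (nth [::] ws i))].
pose A := None |: [set Some i | i in B].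
pose key w := if pb (L (vs w)) then None else Some (idx (vs w)).
have [m [hm hk]] : exists m, m <= #|A| /\ has_kappa (star L) m.
  apply: (kappa_keyF (key := key)).
  - move=> w; rewrite /key; case: pbP => hv; first exact: setU11.
    apply: setU1r; apply: imset_f; rewrite inE; apply/pbP => hn.
    by apply: hv; have := (hq (vs w) [::]).2; rewrite !cats0; apply.
  - move=> w w' e x; rewrite /quot !qchar /key in e *.
    case: pbP e => hv; case: pbP => hv' // e.
      split => [[y [z [-> hy hz]]]|[y [z [-> hy hz]]]].
        exists [::], (y ++ z); split => //; first by rewrite cats0.
        exact: (star_cons (hsc _ _ hy) hz).
      exists [::], (y ++ z); split => //; first by rewrite cats0.
      exact: (star_cons (hsc _ _ hy) hz).
    case: e => e.
    split => [[y [z [-> hy hz]]]|[y [z [-> hy hz]]]]; exists y, z; split => //.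
      by apply/(hq _ y).2; rewrite -e; apply/(hq _ y).1.
    by apply/(hq _ y).2; rewrite e; apply/(hq _ y).1.
exists m; split => //; apply: (leq_trans hm).
have [hC h2] := card_pair_compl ij.
have hB : #|B| <= n - 2.
  rewrite -hC; apply: subset_leq_card; apply/subsetP => i; rewrite !inE => /pbP hn.
  apply/negP => /orP [] /eqP ei; apply: hn; rewrite ei.
    by have := (hq [::] [::]).1 h0; rewrite cats0.
  by have := (hq v1 [::]).1; rewrite !cats0; apply.
have hA : #|A| <= 1 + #|B|.
  by rewrite /A cardsU1 card_imset; [rewrite leq_add2r leq_b1 | exact: Some_inj].
apply: (leq_trans hA); exact: arith_nb h2 hB.
Qed.

Lemma star_bound_factor {S} (L : lang S) : prefix_closed L -> suffix_closed L -> L [::] ->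
  exists m, m <= 2 /\ has_kappa (star L) m.
Proof.
move=> hp hs h0; have hp' := pc_star hp h0; have hs' := sc_star hs h0.
have [m [hm hk]] : exists m, m <= #|[set: bool]| /\ has_kappa (star L) m.
  apply: (kappa_keyF (key := fun w => pb (star L w))) => // w w' e x.
  case: pbP e => hw; case: pbP => hw' // _; rewrite /quot.
    split => h; [apply: star_cat hw' (hs' _ _ h) | apply: star_cat hw (hs' _ _ h)].
  by split => h; [case: hw; apply: hp' h | case: hw'; apply: hp' h].
by exists m; rewrite cardsT card_bool in hm.
Qed.

Lemma factor_pc {S} (L : lang S) : factor_closed L -> prefix_closed L.
Proof. by move=> h u v huv; apply: (h [::] u v). Qed.
Lemma factor_sc {S} (L : lang S) : factor_closed L -> suffix_closed L.
Proof. by move=> h u v huv; apply: (h u v [::]); rewrite cats0. Qed.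
Lemma subword_factor {S : eqType} (L : lang S) : subword_closed L -> factor_closed L.
Proof.
move=> h u v x hl; apply: (h v (u ++ v ++ x)) => //.
exact: subseq_trans (prefix_subseq v x) (suffix_subseq u (v ++ x)).
Qed.

Lemma part1 (c : closure_class) (Sigma : finType) (L : lang Sigma) (n : nat) :
     0 < #|Sigma| -> hyps c L n ->
     [/\ has_kappa (compl L) n,
         (exists m, [/\ has_kappa (star L) m, has_kappa (compl (star L)) m
                       & m <= fbound c n]),
         (exists m, [/\ has_kappa (star (compl (star L))) m,
                       has_kappa (compl (star (compl (star L)))) m
                       & m <= fbound c n + 1])
       & (exists m, [/\ has_kappa (star (compl L)) m,
                       has_kappa (compl (star (compl L))) m
                       & m <= n + 1])].
Proof.
move=> _ [hreg hcl hk [hne hnf] h8].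
have [w0 hw0] : exists w, L w.
  by apply: NNPP => hn; apply: hne => w; split => // hw; apply: hn; exists w.
have [z nz] : exists z, ~ L z.
  by apply: NNPP => hn; apply: hnf => w; split => // _; apply: NNPP => hw; apply: hn; exists w.
have hLS : ~ lang_eq L (star L) by apply: (h8 0 4).
have [hosc h0 [m [hm hkm]]] : [/\ osc L, L [::] &
    exists m, m <= fbound c n /\ has_kappa (star L) m].
  case: c hcl h8 => /= hcl h8.
  - have h0 := pc_nil hcl hw0; split => //; first by left.
    by apply: star_bound_prefix => //; exists z.
  - have h0 := sc_nil hcl hw0; split => //; first by right.
    exact: star_bound_suffix.
  - have h0 := pc_nil (factor_pc hcl) hw0; split => //; first by left; exact: factor_pc.
    by apply: star_bound_factor => //; [exact: factor_pc | exact: factor_sc].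
  - have hf := subword_factor hcl.
    have h0 := pc_nil (factor_pc hf) hw0; split => //; first by left; exact: factor_pc.
    by apply: star_bound_factor => //; [exact: factor_pc | exact: factor_sc].
split.
- exact: kappa_compl.
- by exists m; split => //; exact: kappa_compl.
- have [m' [hm' hk']] := star_compl_kappa (star_nil L) (osc_star hosc h0) hkm.
  exists m'; split => //; first exact: kappa_compl.
  by apply: (leq_trans hm'); rewrite addn1 ltnS.
- have [m' [hm' hk']] := star_compl_kappa h0 hosc hk.
  by exists m'; split => //; [exact: kappa_compl | rewrite addn1].
Qed.

Definition family {S} {I : finType} (M : lang S) (g : I -> seq S) :=
  [/\ forall i, g i <> [::], (forall i j, i != j -> ~ lang_eq (quot M (g i)) (quot M (g j)))
    & forall i, M (g i) \/ exists x, x <> [::] /\ ((M x /\ ~ M (g i ++ x)) \/ (~ M x /\ M (g i ++ x)))].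

Lemma witness c (Sigma : finType) (L : lang Sigma) n (I J : finType) (g : I -> seq Sigma)
  (h : J -> seq Sigma) :
  0 < #|Sigma| -> closed_in c L -> osc L -> L [::] -> (exists x0, x0 <> [::] /\ L x0) ->
  (exists y0, star L y0 /\ ~ L y0) ->
  (exists m, m <= n /\ has_kappa L m) -> #|J| = n -> family L h ->
  #|I| = fbound c n -> family (star L) g ->
  [/\ 0 < #|Sigma|, hyps c L n, has_kappa (star L) (fbound c n),
      has_kappa (star (compl (star L))) (fbound c n + 1)
    & has_kappa (star (compl L)) (n + 1)].
Proof.
move=> hS hcl hosc h0 [x0 [nx hx]] [y0 [sy ny]] [m0 [hm0 hk0]] hJ [hne hd hsep] hI [gne gd gsep].
have hk : has_kappa L n by rewrite -hJ; apply: kappa_exact hk0 _ hd; rewrite hJ.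
have hy : hyps c L n.
  split => //; first exact: kappa_regular hk.
    split => [e|e]; [by have := e [::]; case => /(_ h0) | by apply: ny; apply/e].
  exact: eight_ok h0 hosc nx hx sy ny.
have [_ [m1 [k1 _ b1]] [m2 [k2 _ b2]] [m3 [k3 _ b3]]] := part1 hS hy.
have s0 : star L [::] := star_nil L.
have hos := osc_star hosc h0.
split => //.
- by rewrite -hI; apply: kappa_exact k1 _ gd; rewrite hI.
- have -> : fbound c n + 1 = #|{: option I}| by rewrite card_option hI addn1.
  apply: (kappa_exact (g := oapp g [::])) k2 _ _; first by rewrite card_option hI -addn1.
  exact: star_compl_lower.
- have -> : n + 1 = #|{: option J}| by rewrite card_option hJ addn1.
  apply: (kappa_exact (g := oapp h [::])) k3 _ _; first by rewrite card_option hJ -addn1.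
  exact: star_compl_lower.
Qed.

Definition cntb (w : seq (option bool)) := count_mem (Some true) w.
Definition LF (K : nat) : lang (option bool) :=
  fun w => (None \notin w) && (cntb w <= K).
Definition knF K (w : seq (option bool)) := if None \in w then K.+1 else minn (cntb w) K.+1.

Lemma LF_cat K w x : LF K (w ++ x) <-> (None \notin x) && (knF K w + cntb x <= K).
Proof.
rewrite /LF /knF /cntb mem_cat count_cat negb_or.
case: (None \in w) => /=; first by split => // /andP [_]; rewrite addSn ltnNge leq_addr.
case: (leqP (count_mem (Some true) w) K) => hw.
  by rewrite (minn_idPl (leqW hw)).
rewrite (minn_idPr hw); split => /andP [_ h].
  by move: h; rewrite leqNgt (leq_trans hw (leq_addr _ _)).
by move: h; rewrite leqNgt (leq_trans (leqnn K.+1) (leq_addr _ _)).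
Qed.

Lemma LF_subword K : subword_closed (LF K).
Proof.
move=> u w hs /andP [hn hc]; apply/andP; split.
  by apply/negP => hu; move: hn; rewrite (mem_subseq hs hu).
exact: leq_trans (leq_count_subseq _ hs) hc.
Qed.

Lemma LF_star K w : 0 < K -> star (LF K) w <-> None \notin w.
Proof.
move=> hK; split.
  move: w; apply: star_ind_gen => // u v /andP [hu _] hv.
  by rewrite mem_cat negb_or hu.
elim: w => [|s w IH]; first by move=> _; exact: star_nil.
rewrite in_cons negb_or => /andP [hs hw].
rewrite -cat1s; apply: star_cons; last exact: IH.
by case: s hs => [[]|] //= _; rewrite /LF /cntb.
Qed.

Lemma LF_nseq K i x : LF K ((Some false :: nseq i (Some true)) ++ x) <-> (None \notin x) && (i + cntb x <= K).
Proof.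
rewrite /LF /cntb /= in_cons mem_cat mem_nseq count_cat count_nseq /= mul1n add0n andbF /=.
by [].
Qed.

Lemma arith_eqK i j K : i < K.+1 -> j < K.+1 -> (forall m, (i + m <= K) = (j + m <= K)) -> i = j.
Proof.
move=> hi hj e; apply/eqP; rewrite eqn_leq.
have hi' : i <= K := hi; have hj' : j <= K := hj.
have := e (K - j); have := e (K - i); rewrite !subnKC // leqnn.
move=> h1 h2; rewrite -(leq_add2r (K - j)) subnKC // h2 /=.
by rewrite -(leq_add2r (K - i)) subnKC // -h1.
Qed.

Lemma factor_witness K : 0 < K -> forall c, c = Factor \/ c = Subword ->
  [/\ 0 < #|{: option bool}|, hyps c (LF K) K.+2, has_kappa (star (LF K)) (fbound c K.+2),
      has_kappa (star (compl (star (LF K)))) (fbound c K.+2 + 1)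
    & has_kappa (star (compl (LF K))) (K.+2 + 1)].
Proof.
move=> hK c hc.
have hsw : subword_closed (LF K) := @LF_subword K; have hf := subword_factor hsw.
have h0 : LF K [::] by [].
pose h := fun j : option 'I_K.+1 => if j is Some i then Some false :: nseq i (Some true) else [:: None].
pose g := fun b : bool => if b then [:: Some false] else [:: None].
apply: (witness (I := bool) (J := option 'I_K.+1) (g := g) (h := h)).
- by rewrite card_option.
- by case: hc => ->.
- by left; exact: factor_pc.
- exact: h0.
- by exists [:: Some false].
- exists (nseq K.+1 (Some true)); split.
    by apply/LF_star => //; rewrite mem_nseq; case: K.+1.
  by rewrite /LF /cntb count_nseq /= mul1n ltnn andbF.
- apply: (kappa_key (key := knF K)).
    by move=> w; rewrite /knF; case: (None \in w) => //; rewrite ltnS geq_minr.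
  by move=> w w' e x; rewrite /quot !LF_cat e.
- by rewrite card_option card_ord.
- split.
  + by case.
  + case=> [i|] [j|] hij heq //.
    * have e : forall m, (i + m <= K) = (j + m <= K).
        move=> m; have := heq (nseq m (Some true)).
        rewrite /quot !LF_nseq /cntb count_nseq mem_nseq /= mul1n andbF /=.
        by move=> [h1 h2]; apply/idP/idP => [/h1|/h2].
      have eij : i = j by apply: val_inj; exact: arith_eqK (ltn_ord i) (ltn_ord j) e.
      by rewrite eij eqxx in hij.
    * have := heq [::]; rewrite /quot /h LF_nseq /cntb /=.
      move=> [h1 _]; have := h1; rewrite (_ : i + 0 = i); last exact: addn0.
      by move/(_ (ltn_ord i)).
    * have := heq [::]; rewrite /quot /h LF_nseq /cntb /=.
      move=> [_ h2]; have := h2; rewrite (_ : j + 0 = j); last exact: addn0.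
      by move/(_ (ltn_ord j)).
  + case=> [i|]; first by left; have := (LF_nseq K i [::]).2; rewrite cats0; apply; rewrite /cntb /= (addn0 i); exact: (ltn_ord i).
    by right; exists [:: Some false]; split => //; left.
- by case: hc => ->; rewrite card_bool.
- split.
  + by case.
  + case=> [] [] // _ heq; have := heq [::]; rewrite /quot /= !LF_star //.
      by move=> [h1 _]; have := h1 isT.
    by move=> [_ h2]; have := h2 isT.
  + case; first by left; apply/LF_star.
    right; exists [:: Some false]; split => //; left; split; first by apply/LF_star.
    by move/(LF_star _ hK).
Qed.


Definition QP k := option (option 'I_k).
Definition dP k (q : option (option 'I_k)) (a : 'I_k + 'I_k) : option (option 'I_k) :=
  match q, a with
  | None, _ => None
  | Some None, inl i => Some (Some i)
  | Some None, inr _ => None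
  | Some (Some j), inl _ => Some (Some j)
  | Some (Some j), inr i => if i == j then Some None else None
  end.
Definition rP k q (w : seq ('I_k + 'I_k)) := foldl (@dP k) q w.
Definition LP k : lang ('I_k + 'I_k) := fun w => rP (Some None) w != None.
Arguments LP : clear implicits.

Lemma rP_None k w : @rP k None w = None.
Proof. by elim: w. Qed.
Lemma rP_cat k q u v : @rP k q (u ++ v) = rP (rP q u) v.
Proof. exact: foldl_cat. Qed.
Lemma rP_A k j (s : seq 'I_k) : rP (Some (Some j)) (map inl s) = Some (Some j).
Proof. by elim: s. Qed.

Lemma quot_LP k w x : quot (LP k) w x <-> rP (rP (Some None) w) x != None.
Proof. by rewrite /quot /LP rP_cat. Qed.

Lemma LP_pc k : prefix_closed (LP k).
Proof. by move=> u v; rewrite /LP rP_cat; case: (rP _ u) => //; rewrite rP_None. Qed.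

Lemma mem_split {T : eqType} (x : T) s : x \in s -> exists p q, s = p ++ x :: q.
Proof.
elim: s => [|y s IH] //; rewrite in_cons => /orP [/eqP ->|/IH [p [q ->]]].
  by exists [::], s.
by exists (y :: p), q.
Qed.

Lemma star_none {S} (L : lang S) w : (forall m, drop m w <> [::] -> ~ L (drop m w)) -> w <> [::] -> ~ star L w.
Proof.
move=> h ne /star_last /(_ ne) [u [v [e _ hv nv]]].
by apply: (h (size u)); rewrite e drop_size_cat.
Qed.

Lemma rP_bad k (t : seq 'I_k) i : i \notin t -> rP (Some None) (map inl t ++ [:: inr i]) = None.
Proof.
case: t => [|j t] //= hi; rewrite rP_cat rP_A /=.
by move: hi; rewrite in_cons negb_or => /andP [/negbTE -> _].
Qed.

Lemma card_setT_pow (T : finType) : #|{: {set T}}| = 2 ^ #|T|.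
Proof.
transitivity #|powerset [set: T]|; last by rewrite card_powerset cardsT.
by apply: eq_card => X; rewrite powersetE subsetT.
Qed.

Lemma prefix_witness k :
  [/\ 0 < #|{: 'I_k.+2 + 'I_k.+2}|, hyps Prefix (LP k.+2) k.+4, has_kappa (star (LP k.+2)) (fbound Prefix k.+4),
      has_kappa (star (compl (star (LP k.+2)))) (fbound Prefix k.+4 + 1)
    & has_kappa (star (compl (LP k.+2))) (k.+4 + 1)].
Proof.
set K := k.+2.
pose i0 : 'I_K := ord0. pose i1 : 'I_K := Ordinal (isT : 1 < K).
pose h := fun q : QP K => match q with None => [:: inr i0] | Some None => [:: inl i0; inr i0]
                                     | Some (Some i) => [:: inl i] end.
pose g := fun o : option {set 'I_K} => match o with None => [:: @inr 'I_K 'I_K i0]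
   | Some X => [:: inl i0; inr i0] ++ map inl (enum X) end.
have h0 : LP K [::] by [].
have LA : forall j : 'I_K, LP K [:: inl j] by [].
have starA : forall s : seq 'I_K, star (LP K) (map inl s).
  by elim => [|j s IH]; [exact: star_nil | exact: (star_cons (LA j) IH)].
have F1 : forall X, star (LP K) (g (Some X)).
  by move=> X; apply: star_cons; [rewrite /LP /= ?eqxx | exact: starA].
have nsD : ~ star (LP K) [:: inr i0].
  by apply: star_none => // [[|[|m]]] //= _; rewrite /LP /=.
have F4 : forall x, ~ star (LP K) ([:: inr i0] ++ x).
  move=> x /(@star_dec _ (LP K) [:: inr i0] x h0) [u [v [y [z [e hu _ hvy _]]]]].
  case: u e hu => [|a u] /= e hu.
    by move: hvy; rewrite -e /LP /= rP_None.
  injection e as ea eu; case: u eu hu => //= _ hu.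
  by apply: nsD; rewrite ea.
have F2 : forall (X : {set 'I_K}) i, i \in X -> star (LP K) (g (Some X) ++ [:: inr i]).
  move=> X i; rewrite -mem_enum => /mem_split [p [q e]].
  rewrite /g e map_cat -!catA; apply: star_cons; first by rewrite /LP /= ?eqxx.
  apply: star_cat (starA p) _; apply: star_one.
  by rewrite /LP /= rP_cat rP_A /= eqxx.
have F3 : forall (X : {set 'I_K}) i, i \notin X -> ~ star (LP K) (g (Some X) ++ [:: inr i]).
  move=> X i hi; apply: star_none => //; case=> [|[|m]] /= ne.
  - by rewrite /LP /= ?eqxx rP_bad ?mem_enum.
  - by rewrite /LP /= rP_None.
  rewrite drop_cat size_map; case: ltnP => hm.
    by rewrite -map_drop /LP rP_bad //; apply/negP => /mem_drop; rewrite mem_enum; apply/negP.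
  move: ne; rewrite drop_cat size_map ltnNge hm /=.
  by case: (m - _) => [|r] //= _; rewrite /LP /=.
have hr : forall q, rP (Some None) (h q) = q by case=> [[i|]|] //=; rewrite ?eqxx.
have LAD : forall j : 'I_K, LP K [:: inl j; inr j] by move=> j; rewrite /LP /= eqxx.
apply: (witness (I := option {set 'I_K}) (J := QP K) (g := g) (h := h)).
- by rewrite card_sum card_ord.
- exact: LP_pc.
- by left; exact: LP_pc.
- exact: h0.
- by exists [:: inl i0].
- exists [:: inl i0; inl i1; inr i1]; split.
    by apply: (star_cons (LA i0)); apply: star_one; apply: LAD.
  by rewrite /LP /=.
- have [m [hm hk]] : exists m, m <= #|[set: QP K]| /\ has_kappa (LP K) m.
    apply: (kappa_keyF (key := rP (Some None))) => // w w' e x.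
    by rewrite /quot /LP !rP_cat e.
  by exists m; split => //; rewrite cardsT /QP !card_option card_ord in hm.
- by rewrite /QP !card_option card_ord.
- split.
  + by case=> [[i|]|].
  + move=> q q' nq heq.
    have key : forall x, (rP q x != None) = (rP q' x != None).
      move=> x; have := heq x; rewrite /quot /LP !rP_cat !hr.
      by move=> [h1 h2]; apply/idP/idP => [/h1|/h2].
    clear heq; case: q q' nq key => [[i|]|] [[j|]|] //= nq key;
    first [ by have := key [::]; rewrite /= ?rP_None
               | by have := key [:: inr j]; rewrite /= ?eqxx
               | by have := key [:: inr i]; rewrite /= ?eqxx
               | have := key [:: inr i]; rewrite /= eqxx;
                 by case: (i =P j) nq => [->|_]; rewrite ?eqxx ].
  + case=> [[i|]|]; try by left; rewrite /LP hr.
    right; exists [:: inl i0]; split => //; left; split; first exact: LA.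
    by rewrite /LP /= ?rP_None.
- by rewrite card_option card_setT_pow card_ord /fbound !subSS subn0 addn1.
- split.
  + case=> [X|] //.
  + case=> [X|] [Y|] //= nXY heq.
    * have [i hi] : exists i, (i \in X) != (i \in Y).
        apply: NNPP => hn; move: nXY; rewrite (_ : X = Y) ?eqxx //.
        apply/setP => i; apply: NNPP => hi; apply: hn; exists i; by apply/eqP.
      have := heq [:: inr i]; rewrite /quot.
      case hX : (i \in X) hi; case hY : (i \in Y) => //= _.
        move=> [h1 _]; have := h1 (F2 _ _ hX); exact: F3 _ _ (negbT hY).
      move=> [_ h2]; have := h2 (F2 _ _ hY); exact: F3 _ _ (negbT hX).
    * have := heq [::]; rewrite /quot !cats0 => [[h1 _]].
      by apply: (F4 [::]); rewrite cats0; apply: h1; exact: F1.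
    * have := heq [::]; rewrite /quot !cats0 => [[_ h2]].
      by apply: (F4 [::]); rewrite cats0; apply: h2; exact: F1.
  + case=> [X|]; first by left; exact: F1.
    right; exists [:: inl i0]; split => //; left; split; first exact: star_one.
    exact: F4.
Qed.

Definition QS K := option (option (option 'I_K)).
Definition dS K (q : QS K) (a : option ('I_K + 'I_K)) : QS K :=
  match q, a with
  | None, _ => None
  | Some None, None => Some None
  | Some None, Some (inl i) => Some (Some (Some i))
  | Some None, Some (inr i) => Some (Some None)
  | Some (Some None), _ => None
  | Some (Some (Some j)), Some (inr i) => if i == j then Some (Some None) else None
  | Some (Some (Some j)), _ => None
  end.
Definition rS K (q : QS K) w := foldl (@dS K) q w.
Definition aS K (q : QS K) := (q == Some None) || (q == Some (Some None)).
Definition LS K : lang (option ('I_K + 'I_K)) := fun w => aS (rS (Some None) w).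
Arguments LS : clear implicits.

Lemma rS_None K w : @rS K None w = None.
Proof. by elim: w. Qed.
Lemma rS_cat K q u v : @rS K q (u ++ v) = rS (rS q u) v.
Proof. exact: foldl_cat. Qed.

Lemma aS_E K v : aS (@rS K (Some (Some None)) v) -> v = [::].
Proof. by case: v => //= a v; rewrite rS_None. Qed.

Lemma LS_sc K : suffix_closed (LS K).
Proof.
have key : forall q v, aS (@rS K q v) -> aS (rS (Some None) v).
  case=> [[[j|]|]|] v.
  - case: v => [|[[i|i]|] v] //=; rewrite ?rS_None //.
    by case: (i == j) => //; rewrite rS_None.
  - by move/aS_E => ->.
  - by [].
  - by rewrite rS_None.
by move=> u v; rewrite /LS rS_cat; apply: key.
Qed.

Lemma star_none2 {S} (L : lang S) w :
  (forall m, drop m w <> [::] -> ~ L (drop m w) \/ ~ star L (take m w)) -> w <> [::] -> ~ star L w.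
Proof.
move=> h ne /star_last /(_ ne) [u [v [e hu hv nv]]].
have := h (size u); rewrite e drop_size_cat // take_size_cat // => /(_ nv); tauto.
Qed.

Lemma suffix_witness k :
  [/\ 0 < #|{: option ('I_k.+1 + 'I_k.+1)}|, hyps Suffix (LS k.+1) k.+4,
      has_kappa (star (LS k.+1)) (fbound Suffix k.+4),
      has_kappa (star (compl (star (LS k.+1)))) (fbound Suffix k.+4 + 1)
    & has_kappa (star (compl (LS k.+1))) (k.+4 + 1)].
Proof.
set K := k.+1.
pose i0 : 'I_K := ord0.
pose c : option ('I_K + 'I_K) := None.
pose A (i : 'I_K) : option ('I_K + 'I_K) := Some (inl i).
pose B (i : 'I_K) : option ('I_K + 'I_K) := Some (inr i).
pose h := fun q : QS K => match q with None => [:: B i0; B i0] | Some None => [:: c]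
   | Some (Some None) => [:: B i0] | Some (Some (Some i)) => [:: A i] end.
pose g := fun o : option (option 'I_K) => match o with None => [:: c]
   | Some None => [:: A i0; A i0] | Some (Some i) => [:: A i] end.
have h0 : LS K [::] by [].
have S2 : forall i, ~ star (LS K) [:: A i].
  by move=> i; apply: star_none2 => // [[|m]] //= _; left.
have S4 : forall x, ~ star (LS K) ([:: A i0; A i0] ++ x).
  move=> x /(@star_dec _ (LS K) [:: A i0; A i0] x h0) [u [v [y [z [e hu _ hvy _]]]]].
  case: u e hu => [|a [|b u]] /= e hu.
  - by move: hvy; rewrite -e /LS /= rS_None.
  - by injection e as ea ev; apply: (S2 i0); rewrite ea.
  - injection e as ea eb eu; case: u eu hu => // _ hu; move: hu; rewrite -ea -eb.
    by apply: star_none2 => // [[|[|m]]] //= _; left.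
have S5 : forall i, ~ star (LS K) [:: A i; c].
  by move=> i; apply: star_none2 => // [[|[|m]]] //= _; [left | right; exact: S2].
have S3 : forall i j, i != j -> ~ star (LS K) [:: A j; B i].
  move=> i j ij; apply: star_none2 => // [[|[|m]]] //= _; last by right; exact: S2.
  by left; rewrite /LS /= (negbTE ij).
have LAB : forall i, LS K [:: A i; B i] by move=> i; rewrite /LS /= eqxx.
have hr : forall q, rS (Some None) (h q) = q by case=> [[[i|]|]|].
apply: (witness (I := option (option 'I_K)) (J := QS K) (g := g) (h := h)).
- by rewrite card_option.
- exact: LS_sc.
- by right; exact: LS_sc.
- exact: h0.
- by exists [:: B i0].
- exists [:: B i0; B i0]; split => //.
  by apply: (star_cons (_ : LS K [:: B i0])) => //; exact: star_one.
- have [m [hm hk]] : exists m, m <= #|[set: QS K]| /\ has_kappa (LS K) m.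
    apply: (kappa_keyF (key := rS (Some None))) => // w w' e x.
    by rewrite /quot /LS !rS_cat e.
  by exists m; split => //; rewrite cardsT /QS !card_option card_ord in hm.
- by rewrite /QS !card_option card_ord.
- split.
  + by case=> [[[i|]|]|].
  + move=> q q' nq heq.
    have key : forall x, aS (rS q x) = aS (rS q' x).
      move=> x; have := heq x; rewrite /quot /LS !rS_cat !hr.
      by move=> [h1 h2]; apply/idP/idP => [/h1|/h2].
    clear heq; case: q q' nq key => [[[i|]|]|] [[[j|]|]|] //= nq key;
    first [ by have := key [::]
          | by have := key [:: c]
          | by have := key [:: B j]; rewrite /= ?eqxx
          | by have := key [:: B i]; rewrite /= ?eqxx
          | have := key [:: B i]; rewrite /= eqxx;
            by case: (i =P j) nq => [->|_]; rewrite ?eqxx ].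
  + case=> [[[i|]|]|]; try by left; rewrite /LS hr.
    * by right; exists [:: c]; split => //; left.
    * by right; exists [:: c]; split => //; left; rewrite /LS /= ?rS_None.
- by rewrite !card_option card_ord /fbound subn1.
- split.
  + by case=> [[i|]|].
  + case=> [[i|]|] [[j|]|] //= nij heq; rewrite /quot in heq.
    * have := heq [:: B i]; rewrite /= => -[h1 _]; apply: (S3 i j).
        by apply: contraNneq nij => ->.
      by apply: h1; apply: star_one.
    * have := heq [:: B i]; rewrite /= => -[h1 _].
      by apply: (S4 [:: B i]); apply: h1; apply: star_one.
    * have := heq [::]; rewrite /= => -[_ h2]; apply: (S2 i).
      by apply: h2; apply: star_one.
    * have := heq [:: B j]; rewrite /= => -[_ h2].
      by apply: (S4 [:: B j]); apply: h2; apply: star_one.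
    * have := heq [::]; rewrite /= => -[_ h2]; apply: (S4 [::]).
      by rewrite cats0; apply: h2; apply: star_one.
    * have := heq [::]; rewrite /= => -[h1 _]; apply: (S2 j).
      by apply: h1; apply: star_one.
    * have := heq [::]; rewrite /= => -[h1 _]; apply: (S4 [::]).
      by rewrite cats0; apply: h1; apply: star_one.
  + case=> [[i|]|].
    * by right; exists [:: c]; split => //; left; split; [exact: star_one | exact: S5].
    * by right; exists [:: c]; split => //; left; split; [exact: star_one | exact: (S4 [:: c])].
    * by left; exact: star_one.
Qed.

Theorem theorem7 :
  (forall (c : closure_class) (Sigma : finType) (L : lang Sigma) (n : nat),
     0 < #|Sigma| -> hyps c L n ->
     [/\ has_kappa (compl L) n,
         (exists m, [/\ has_kappa (star L) m, has_kappa (compl (star L)) m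
                       & m <= fbound c n]),
         (exists m, [/\ has_kappa (star (compl (star L))) m,
                       has_kappa (compl (star (compl (star L)))) m
                       & m <= fbound c n + 1])
       & (exists m, [/\ has_kappa (star (compl L)) m,
                       has_kappa (compl (star (compl L))) m
                       & m <= n + 1])]) /\
  (forall c : closure_class, exists N : nat, forall n : nat, N <= n ->
     exists (Sigma : finType) (L : lang Sigma),
       [/\ 0 < #|Sigma|, hyps c L n,
           has_kappa (star L) (fbound c n),
           has_kappa (star (compl (star L))) (fbound c n + 1)
         & has_kappa (star (compl L)) (n + 1)]).
Proof.
split; first exact: part1.
case.
- exists 4; case=> [|[|[|[|k]]]] // _.
  by exists ('I_k.+2 + 'I_k.+2)%type, (LP k.+2); exact: prefix_witness.
- exists 4; case=> [|[|[|[|k]]]] // _.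
  by exists (option ('I_k.+1 + 'I_k.+1)), (LS k.+1); exact: suffix_witness.
- exists 3; case=> [|[|[|k]]] // _.
  by exists (option bool), (LF k.+1); apply: factor_witness => //; left.
- exists 3; case=> [|[|[|k]]] // _.
  by exists (option bool), (LF k.+1); apply: factor_witness => //; right.
Qed.
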